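(* Let $P$ be a continuous poset and $M$ a persistence module over $P$. Then $\underline{\underline M}\cong\underline M$, $\overline{\overline M}\cong\overline M$, $\underline{(\overline M)}\cong\underline M$ and $\overline{(\underline M)}\cong\overline M$. In particular $\underline M$ is upper semi-continuous and $\overline M$ is lower semi-continuous.
   Context: Let $P$ be a poset. A subset is directed if nonempty and any two elements have an upper bound in it. $x\ll y$ ($x$ way below $y$) means: for every directed $D$ whose supremum exists with $y\le\sup D$, some $d\in D$ satisfies $x\le d$. $P$ is continuous if for each $p$ the set $\{x:x\ll p\}$ is directed with supremum $p$. $k$ is a commutative ring with unity; a persistence module over $P$ is a functor $M$ from $P$ (as a category, $p\to q$ iff $p\le q$) to $k$-modules, with modules $M_p$ and internal maps $M(p\le q)$. Define persistence modules $\underline M_p=\varprojlim_{x\gg p}M_x$ and $\overline M_p=\varinjlim_{x\ll p}M_x$ (internal maps induced by universal properties); there are canonical morphisms $M\to\underline M$ and $\overline M\to M$. $M$ is upper semi-continuous if $M\to\underline M$ is an isomorphism, and lower semi-continuous if $\overline M\to M$ is an isomorphism. *)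

(* Defs.v *)
From HB Require Import structures.
From mathcomp Require Import all_boot all_order all_algebra.
Set Implicit Arguments. Unset Strict Implicit. Unset Printing Implicit Defensive.
Import Order.TTheory GRing.Theory.
Local Open Scope order_scope.

Section Poset.
Context {d : Order.disp_t} (P : porderType d).

Definition directed (D : P -> Prop) : Prop :=
  (exists x, D x) /\
  (forall x y, D x -> D y -> exists z, [/\ D z, x <= z & y <= z]).

Definition is_sup (D : P -> Prop) (s : P) : Prop :=
  (forall x, D x -> x <= s) /\
  (forall u, (forall x, D x -> x <= u) -> s <= u).

Definition way_below (x y : P) : Prop :=
  forall (D : P -> Prop) (s : P), directed D -> is_sup D s -> y <= s ->
    exists2 z, D z & x <= z.

Definition continuous_poset : Prop :=
  forall p, directed (fun x => way_below x p) /\ is_sup (fun x => way_below x p) p.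
End Poset.

Section PMod.
Context (k : comPzRingType) {d : Order.disp_t} (P : porderType d).

Record pmod := PMod {
  pobj :> P -> lmodType k;
  pmap : forall p q : P, p <= q -> {linear pobj p -> pobj q};
  pmap_id : forall p (h : p <= p) v, pmap h v = v;
  pmap_comp : forall p q r (h1 : p <= q) (h2 : q <= r) (h3 : p <= r) v,
      pmap h3 v = pmap h2 (pmap h1 v)
}.

Definition natural (M N : pmod) (f : forall p, {linear M p -> N p}) : Prop :=
  forall p q (h : p <= q) v, f q (pmap M h v) = pmap N h (f p v).

Definition pmod_iso (M N : pmod) : Prop :=
  exists f : forall p, {linear M p -> N p}, natural f /\ forall p, bijective (f p).

(** (L, pi) is a limit of the diagram (M_x)_{x >> p} (pi x is irrelevant
    unless p << x). *)
Definition is_lim_above (M : pmod) (p : P) (L : lmodType k)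
    (pi : forall x, {linear L -> M x}) : Prop :=
  (forall x y (h : x <= y), way_below p x -> way_below p y ->
     forall v, pmap M h (pi x v) = pi y v) /\
  (forall (A : lmodType k) (f : forall x, {linear A -> M x}),
     (forall x y (h : x <= y), way_below p x -> way_below p y ->
        forall a, pmap M h (f x a) = f y a) ->
     exists u : {linear A -> L},
       (forall x, way_below p x -> forall a, pi x (u a) = f x a) /\
       (forall u' : {linear A -> L},
          (forall x, way_below p x -> forall a, pi x (u' a) = f x a) ->
          forall a, u' a = u a)).

Definition is_colim_below (M : pmod) (p : P) (C : lmodType k)
    (iota : forall x, {linear M x -> C}) : Prop :=
  (forall x y (h : x <= y), way_below x p -> way_below y p ->
     forall v, iota y (pmap M h v) = iota x v) /\
  (forall (A : lmodType k) (g : forall x, {linear M x -> A}),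
     (forall x y (h : x <= y), way_below x p -> way_below y p ->
        forall v, g y (pmap M h v) = g x v) ->
     exists u : {linear C -> A},
       (forall x, way_below x p -> forall v, u (iota x v) = g x v) /\
       (forall u' : {linear C -> A},
          (forall x, way_below x p -> forall v, u' (iota x v) = g x v) ->
          forall c, u' c = u c)).

(** UM (with cone maps eps) is  \underline M :  UM_p = lim_{x >> p} M_x,
    internal maps induced by the universal property. *)
Definition is_upper (M UM : pmod) (eps : forall p x, {linear UM p -> M x}) : Prop :=
  (forall p, @is_lim_above M p (UM p) (eps p)) /\
  (forall p q (h : p <= q) x, way_below q x ->
     forall v, eps q x (pmap UM h v) = eps p x v).

(** OM (with cocone maps iota) is  \overline M :  OM_p = colim_{x << p} M_x. *)
Definition is_lower (M OM : pmod) (iota : forall p x, {linear M x -> OM p}) : Prop :=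
  (forall p, @is_colim_below M p (OM p) (iota p)) /\
  (forall p q (h : p <= q) x, way_below x p ->
     forall v, pmap OM h (iota p x v) = iota q x v).

Definition usc (M UM : pmod) (eps : forall p x, {linear UM p -> M x}) : Prop :=
  exists eta : forall p, {linear M p -> UM p},
    [/\ natural eta,
        (forall p x (h : p <= x), way_below p x ->
           forall v, eps p x (eta p v) = pmap M h v)
      & forall p, bijective (eta p)].

Definition lsc (M OM : pmod) (iota : forall p x, {linear M x -> OM p}) : Prop :=
  exists th : forall p, {linear OM p -> M p},
    [/\ natural th,
        (forall p x (h : x <= p), way_below x p ->
           forall v, th p (iota p x v) = pmap M h v)
      & forall p, bijective (th p)].
End PMod.

(* Main.v *)
Require Import Defs.
From HB Require Import structures.
From mathcomp Require Import all_boot all_order all_algebra.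
From Stdlib Require Import ClassicalEpsilon.

Set Implicit Arguments. Unset Strict Implicit. Unset Printing Implicit Defensive.
Import Order.TTheory GRing.Theory.

Local Notation pmp M h := (Defs.pmap M h).

Section Aux.
Context {d : Order.disp_t} {P : porderType d}.
Local Open Scope order_scope.

Lemma wb_le (x y : P) : way_below x y -> x <= y.
Proof.
move=> H.
have dD : directed (fun z : P => z = y).
  by split; [exists y | move=> a b -> ->; exists y].
have sD : is_sup (fun z : P => z = y) y.
  by split; [move=> z -> | move=> u; apply].
by have [z -> ] := H _ _ dD sD (lexx y).
Qed.

Lemma wb_trans_r (x y z : P) : way_below x y -> y <= z -> way_below x z.
Proof. by move=> H yz D s dD sD zs; apply: H dD sD _; exact: le_trans yz zs. Qed.

Lemma wb_trans_l (x y z : P) : x <= y -> way_below y z -> way_below x z.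
Proof.
move=> xy H D s dD sD zs; have [w Dw yw] := H D s dD sD zs.
by exists w => //; exact: le_trans xy yw.
Qed.

Definition mid (p y : P) : P :=
  epsilon (inhabits p) (fun x => way_below p x /\ way_below x y).

Section Cont.
Context (Pc : continuous_poset P).

Lemma wb_dir (x y z : P) : way_below x z -> way_below y z ->
  exists w, [/\ way_below w z, x <= w & y <= w].
Proof.
move=> hx hy; have [[_ H] _] := Pc z.
by have [w [? ? ?]] := H x y hx hy; exists w.
Qed.

Lemma wb_interp (x z : P) : way_below x z -> exists y, way_below x y /\ way_below y z.
Proof.
move=> Hxz.
pose D := fun u : P => exists v, way_below u v /\ way_below v z.
have dD : directed D.
  split.
    have [[[v Hv] _] _] := Pc z; have [[[u Hu] _] _] := Pc v.
    by exists u, v.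
  move=> u1 u2 [v1 [h1 h1']] [v2 [h2 h2']].
  have [w [wz v1w v2w]] := wb_dir h1' h2'.
  have [t [tw u1t u2t]] := wb_dir (wb_trans_r h1 v1w) (wb_trans_r h2 v2w).
  by exists t; split => //; exists w.
have sD : is_sup D z.
  split.
    by move=> u [v [uv vz]]; exact: le_trans (wb_le uv) (wb_le vz).
  move=> u0 Hup; have [_ [_ supz]] := Pc z; apply: supz => v Hv.
  have [_ [_ supv]] := Pc v; apply: supv => w Hw; apply: Hup; by exists v.
have [u [v [uv vz]] xu] := Hxz D z dD sD (lexx z).
by exists v; split => //; exact: wb_trans_l xu uv.
Qed.

Lemma mid_spec (p y : P) : way_below p y ->
  way_below p (mid p y) /\ way_below (mid p y) y.
Proof.
move=> H; rewrite /mid.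
exact: (epsilon_spec (inhabits p) (fun x => way_below p x /\ way_below x y) (wb_interp H)).
Qed.
End Cont.
End Aux.

Section Mod.
Context (k : comPzRingType) {d : Order.disp_t} {P : porderType d}.
Context (Pc : continuous_poset P).
Local Open Scope order_scope.

Definition pm (M : pmod k P) (p x : P) : {linear M p -> M x} :=
  match excluded_middle_informative (p <= x) with left h => pmp M h | right _ => (\0)%R end.

Lemma pmE (M : pmod k P) p x (h : p <= x) v : pm M p x v = pmp M h v.
Proof.
rewrite /pm; case: excluded_middle_informative => [h'|//].
by rewrite (bool_irrelevance h' h).
Qed.

Lemma pcomp (M : pmod k P) p q r (h1 : p <= q) (h2 : q <= r) (h3 : p <= r) v :
  pmp M h2 (pmp M h1 v) = pmp M h3 v.
Proof. by symmetry; apply: pmap_comp. Qed.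

Lemma pirr (M : pmod k P) p q (h1 h2 : p <= q) v : pmp M h1 v = pmp M h2 v.
Proof. by rewrite (bool_irrelevance h1 h2). Qed.

Lemma lim_ext (M : pmod k P) p (L : lmodType k) (pi : forall x, {linear L -> M x}) :
  is_lim_above p pi -> forall (A : lmodType k) (u1 u2 : {linear A -> L}),
  (forall x, way_below p x -> forall a, pi x (u1 a) = pi x (u2 a)) ->
  forall a, u1 a = u2 a.
Proof.
move=> [Hc Hu] A u1 u2 H a.
have [u [_ Hun]] := Hu A (fun x => pi x \o u1)
   (fun x y h hx hy b => Hc x y h hx hy (u1 b)).
have e1 := Hun u1 (fun x _ b => erefl) a.
have e2 := Hun u2 (fun x hx b => esym (H x hx b)) a.
by rewrite e1 e2.
Qed.

Lemma colim_ext (M : pmod k P) p (C : lmodType k) (io : forall x, {linear M x -> C}) :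
  is_colim_below p io -> forall (A : lmodType k) (u1 u2 : {linear C -> A}),
  (forall x, way_below x p -> forall v, u1 (io x v) = u2 (io x v)) ->
  forall c, u1 c = u2 c.
Proof.
move=> [Hc Hu] A u1 u2 H c.
have [u [_ Hun]] := Hu A (fun x => u1 \o io x)
   (fun x y h hx hy b => f_equal u1 (Hc x y h hx hy b)).
have e1 := Hun u1 (fun x _ b => erefl) c.
have e2 := Hun u2 (fun x hx b => esym (H x hx b)) c.
by rewrite e1 e2.
Qed.

Lemma nat_inv (M N : pmod k P) (f : forall p, {linear M p -> N p})
  (g : forall p, {linear N p -> M p}) :
  natural f -> (forall p, cancel (f p) (g p)) -> (forall p, cancel (g p) (f p)) ->
  natural g.
Proof.
move=> Hf fK gK p q h v.
by rewrite -{1}(gK p v) -Hf fK.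
Qed.

Section USC.
Context (M UM UUM : pmod k P) (eps1 : forall p x, {linear UM p -> M x})
  (eps2 : forall p x, {linear UUM p -> UM x})
  (H1 : is_upper eps1) (H2 : is_upper eps2).

Lemma eta_ex p : exists u : {linear UM p -> UUM p},
  forall x, way_below p x -> forall a, eps2 p x (u a) = pm UM p x a.
Proof.
destruct ((H2.1 p).2 (UM p) (pm UM p)) as [u [Hu _]]; last by exists u.
move=> x y h hx hy a.
rewrite (pmE (wb_le hx)) (pmE (wb_le hy)); exact: pcomp.
Qed.

Definition eta p := proj1_sig (constructive_indefinite_description _ (eta_ex p)).
Lemma eta_spec p x : way_below p x -> forall a, eps2 p x (eta p a) = pm UM p x a.
Proof. exact: (proj2_sig (constructive_indefinite_description _ (eta_ex p))). Qed.

Lemma u_ind p y x1 x2 : way_below p x1 -> way_below x1 y ->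
  way_below p x2 -> way_below x2 y ->
  forall b, eps1 x1 y (eps2 p x1 b) = eps1 x2 y (eps2 p x2 b).
Proof.
move=> h1 h1' h2 h2' b.
have [z [zy x1z x2z]] := wb_dir Pc h1' h2'.
have hpz := wb_trans_r h1 x1z.
rewrite -(H1.2 x1 z x1z y zy) -(H1.2 x2 z x2z y zy).
by rewrite ((H2.1 p).1 x1 z x1z h1 hpz b) ((H2.1 p).1 x2 z x2z h2 hpz b).
Qed.

Lemma psi_ex p : exists u : {linear UUM p -> UM p},
  forall y, way_below p y -> forall b,
    eps1 p y (u b) = eps1 (mid p y) y (eps2 p (mid p y) b).
Proof.
destruct ((H1.1 p).2 (UUM p)
   (fun y => eps1 (mid p y) y \o eps2 p (mid p y))) as [u [Hu _]]; last by exists u.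
move=> y1 y2 h hy1 hy2 b /=.
have [m1 m1'] := mid_spec Pc hy1.
have [m2 m2'] := mid_spec Pc hy2.
rewrite ((H1.1 (mid p y1)).1 y1 y2 h m1' (wb_trans_r m1' h)).
exact: (u_ind m1 (wb_trans_r m1' h) m2 m2' b).
Qed.

Definition psi p := proj1_sig (constructive_indefinite_description _ (psi_ex p)).
Lemma psi_spec p y x : way_below p x -> way_below x y -> forall b,
  eps1 p y (psi p b) = eps1 x y (eps2 p x b).
Proof.
move=> hx hxy b.
have hpy := wb_trans_l (wb_le hx) hxy.
rewrite (proj2_sig (constructive_indefinite_description _ (psi_ex p)) y hpy b).
have [m1 m1'] := mid_spec Pc hpy.
exact: (u_ind m1 m1' hx hxy b).
Qed.

Lemma psi_eta p : cancel (eta p) (psi p).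
Proof.
move=> a; refine (@lim_ext _ _ _ _ (H1.1 p) _ (psi p \o eta p) idfun _ a) => {a} y hy a /=.
have [m1 m1'] := mid_spec Pc hy.
rewrite (psi_spec m1 m1') (eta_spec m1) (pmE (wb_le m1)).
exact: (H1.2 p (mid p y) (wb_le m1) y m1').
Qed.

Lemma eta_psi p : cancel (psi p) (eta p).
Proof.
move=> b; refine (@lim_ext _ _ _ _ (H2.1 p) _ (eta p \o psi p) idfun _ b) => {b} x hx b /=.
rewrite (eta_spec hx).
refine (@lim_ext _ _ _ _ (H1.1 x) _ (pm UM p x \o psi p) (eps2 p x) _ b) => {b} y hy b /=.
rewrite (pmE (wb_le hx)) (H1.2 p x (wb_le hx) y hy).
exact: psi_spec.
Qed.

Lemma eta_nat : natural eta.
Proof.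
move=> p q h v.
refine (@lim_ext _ _ _ _ (H2.1 q) _ (eta q \o pmp UM h) (pmp UUM h \o eta p) _ v) => {v} x hx v /=.
have hpx := wb_trans_l h hx.
rewrite (eta_spec hx) (H2.2 p q h x hx) (eta_spec hpx).
rewrite (pmE (wb_le hx)) (pmE (wb_le hpx)); exact: pcomp.
Qed.

Lemma usc_main : usc eps2 /\ pmod_iso UUM UM.
Proof.
split.
  exists eta; split.
  - exact: eta_nat.
  - by move=> p x h hx v; rewrite (eta_spec hx) (pmE h).
  - by move=> p; exists (psi p); [exact: psi_eta | exact: eta_psi].
exists psi; split.
  exact: (nat_inv eta_nat psi_eta eta_psi).
by move=> p; exists (eta p); [exact: eta_psi | exact: psi_eta].
Qed.
End USC.


Section LSC.
Context (M OM OOM : pmod k P) (iota1 : forall p x, {linear M x -> OM p})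
  (iota2 : forall p x, {linear OM x -> OOM p})
  (H1 : is_lower iota1) (H2 : is_lower iota2).

Lemma lth_ex p : exists u : {linear OOM p -> OM p},
  forall x, way_below x p -> forall v, u (iota2 p x v) = pm OM x p v.
Proof.
destruct ((H2.1 p).2 (OM p) (fun x => pm OM x p)) as [u [Hu _]]; last by exists u.
move=> x y h hx hy v; rewrite (pmE (wb_le hx)) (pmE (wb_le hy)); exact: pcomp.
Qed.

Definition lth p := proj1_sig (constructive_indefinite_description _ (lth_ex p)).
Lemma lth_spec p x : way_below x p -> forall v, lth p (iota2 p x v) = pm OM x p v.
Proof. exact: (proj2_sig (constructive_indefinite_description _ (lth_ex p))). Qed.

Lemma l_ind p y x1 x2 : way_below y x1 -> way_below x1 p ->
  way_below y x2 -> way_below x2 p ->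
  forall v, iota2 p x1 (iota1 x1 y v) = iota2 p x2 (iota1 x2 y v).
Proof.
move=> h1 h1' h2 h2' v.
have [z [zp x1z x2z]] := wb_dir Pc h1' h2'.
rewrite -((H2.1 p).1 x1 z x1z h1' zp) -((H2.1 p).1 x2 z x2z h2' zp).
by rewrite (H1.2 x1 z x1z y h1) (H1.2 x2 z x2z y h2).
Qed.

Lemma lpsi_ex p : exists u : {linear OM p -> OOM p},
  forall y, way_below y p -> forall v,
    u (iota1 p y v) = iota2 p (mid y p) (iota1 (mid y p) y v).
Proof.
destruct ((H1.1 p).2 (OOM p)
  (fun y => iota2 p (mid y p) \o iota1 (mid y p) y)) as [u [Hu _]]; last by exists u.
move=> y1 y2 h hy1 hy2 v /=.
have [m1 m1'] := mid_spec Pc hy1.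
have [m2 m2'] := mid_spec Pc hy2.
rewrite ((H1.1 (mid y2 p)).1 y1 y2 h (wb_trans_l h m2) m2).
exact: (l_ind (wb_trans_l h m2) m2' m1 m1' v).
Qed.

Definition lpsi p := proj1_sig (constructive_indefinite_description _ (lpsi_ex p)).
Lemma lpsi_spec p y x : way_below y x -> way_below x p -> forall v,
  lpsi p (iota1 p y v) = iota2 p x (iota1 x y v).
Proof.
move=> hyx hxp v.
have hyp := wb_trans_r hyx (wb_le hxp).
rewrite (proj2_sig (constructive_indefinite_description _ (lpsi_ex p)) y hyp v).
have [m1 m1'] := mid_spec Pc hyp.
exact: (l_ind m1 m1' hyx hxp v).
Qed.

Lemma lth_psi p : cancel (lpsi p) (lth p).
Proof.
move=> v; refine (@colim_ext _ _ _ _ (H1.1 p) _ (lth p \o lpsi p) idfun _ v) => {v} y hy v /=.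
have [m1 m1'] := mid_spec Pc hy.
rewrite (lpsi_spec m1 m1') (lth_spec m1') (pmE (wb_le m1')).
exact: (H1.2 (mid y p) p (wb_le m1') y m1).
Qed.

Lemma lpsi_th p : cancel (lth p) (lpsi p).
Proof.
move=> c; refine (@colim_ext _ _ _ _ (H2.1 p) _ (lpsi p \o lth p) idfun _ c) => {c} x hx w /=.
rewrite (lth_spec hx).
refine (@colim_ext _ _ _ _ (H1.1 x) _ (lpsi p \o pm OM x p) (iota2 p x) _ w) => {w} y hy v /=.
rewrite (pmE (wb_le hx)) (H1.2 x p (wb_le hx) y hy).
exact: (lpsi_spec hy hx v).
Qed.

Lemma lth_nat : natural lth.
Proof.
move=> p q h c.
refine (@colim_ext _ _ _ _ (H2.1 p) _ (lth q \o pmp OOM h) (pmp OM h \o lth p) _ c) => {c} x hx w /=.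
have hxq := wb_trans_r hx h.
rewrite (H2.2 p q h x hx) (lth_spec hxq) (lth_spec hx) (pmE (wb_le hxq)) (pmE (wb_le hx)).
symmetry; exact: pcomp.
Qed.

Lemma lsc_main : lsc iota2 /\ pmod_iso OOM OM.
Proof.
split.
  exists lth; split.
  - exact: lth_nat.
  - by move=> p x h hx v; rewrite (lth_spec hx) (pmE h).
  - by move=> p; exists (lpsi p); [exact: lpsi_th | exact: lth_psi].
exists lth; split; first exact: lth_nat.
by move=> p; exists (lpsi p); [exact: lpsi_th | exact: lth_psi].
Qed.
End LSC.

Section UOM.
Context (M UM OM UOM : pmod k P) (eps1 : forall p x, {linear UM p -> M x})
  (iota1 : forall p x, {linear M x -> OM p})
  (eps3 : forall p x, {linear UOM p -> OM x})
  (H1e : is_upper eps1) (H1 : is_lower iota1) (H3 : is_upper eps3).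

Lemma uth_ex y : exists u : {linear OM y -> M y},
  forall z, way_below z y -> forall v, u (iota1 y z v) = pm M z y v.
Proof.
destruct ((H1.1 y).2 (M y) (fun z => pm M z y)) as [u [Hu _]]; last by exists u.
move=> x z h hx hz v; rewrite (pmE (wb_le hx)) (pmE (wb_le hz)); exact: pcomp.
Qed.

Definition uth y := proj1_sig (constructive_indefinite_description _ (uth_ex y)).
Lemma uth_spec y z : way_below z y -> forall v, uth y (iota1 y z v) = pm M z y v.
Proof. exact: (proj2_sig (constructive_indefinite_description _ (uth_ex y))). Qed.

Lemma uth_nat y1 y2 (h : y1 <= y2) c : pmp M h (uth y1 c) = uth y2 (pmp OM h c).
Proof.
refine (@colim_ext _ _ _ _ (H1.1 y1) _ (pmp M h \o uth y1) (uth y2 \o pmp OM h) _ c) => {c} z hz v /=.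
have hz2 := wb_trans_r hz h.
rewrite (uth_spec hz) (H1.2 y1 y2 h z hz) (uth_spec hz2) (pmE (wb_le hz)) (pmE (wb_le hz2)).
exact: pcomp.
Qed.

Lemma iota_uth y x (hyx : way_below y x) c : iota1 x y (uth y c) = pmp OM (wb_le hyx) c.
Proof.
refine (@colim_ext _ _ _ _ (H1.1 y) _ (iota1 x y \o uth y) (pmp OM (wb_le hyx)) _ c) => {c} z hz v /=.
rewrite (uth_spec hz) (pmE (wb_le hz)) (H1.2 y x (wb_le hyx) z hz).
exact: ((H1.1 x).1 z y (wb_le hz) (wb_trans_r hz (wb_le hyx)) hyx v).
Qed.

Lemma Phi_ex p : exists u : {linear UOM p -> UM p},
  forall y, way_below p y -> forall b, eps1 p y (u b) = uth y (eps3 p y b).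
Proof.
destruct ((H1e.1 p).2 (UOM p) (fun y => uth y \o eps3 p y)) as [u [Hu _]]; last by exists u.
move=> y1 y2 h hy1 hy2 b /=.
by rewrite uth_nat ((H3.1 p).1 y1 y2 h hy1 hy2).
Qed.

Definition Phi p := proj1_sig (constructive_indefinite_description _ (Phi_ex p)).
Lemma Phi_spec p y : way_below p y -> forall b, eps1 p y (Phi p b) = uth y (eps3 p y b).
Proof. exact: (proj2_sig (constructive_indefinite_description _ (Phi_ex p))). Qed.

Lemma o_ind p x y1 y2 : way_below p y1 -> way_below y1 x ->
  way_below p y2 -> way_below y2 x ->
  forall a, iota1 x y1 (eps1 p y1 a) = iota1 x y2 (eps1 p y2 a).
Proof.
move=> h1 h1' h2 h2' a.
have [z [zx y1z y2z]] := wb_dir Pc h1' h2'.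
have hpz := wb_trans_r h1 y1z.
rewrite -((H1.1 x).1 y1 z y1z h1' zx) -((H1.1 x).1 y2 z y2z h2' zx).
by rewrite ((H1e.1 p).1 y1 z y1z h1 hpz) ((H1e.1 p).1 y2 z y2z h2 hpz).
Qed.

Lemma Psi_ex p : exists u : {linear UM p -> UOM p},
  forall x, way_below p x -> forall a,
    eps3 p x (u a) = iota1 x (mid p x) (eps1 p (mid p x) a).
Proof.
destruct ((H3.1 p).2 (UM p)
  (fun x => iota1 x (mid p x) \o eps1 p (mid p x))) as [u [Hu _]]; last by exists u.
move=> x1 x2 h hx1 hx2 a /=.
have [m1 m1'] := mid_spec Pc hx1.
have [m2 m2'] := mid_spec Pc hx2.
rewrite (H1.2 x1 x2 h (mid p x1) m1').
exact: (o_ind m1 (wb_trans_r m1' h) m2 m2' a).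
Qed.

Definition Psi p := proj1_sig (constructive_indefinite_description _ (Psi_ex p)).
Lemma Psi_spec p x y : way_below p y -> way_below y x -> forall a,
  eps3 p x (Psi p a) = iota1 x y (eps1 p y a).
Proof.
move=> hpy hyx a.
have hpx := wb_trans_l (wb_le hpy) hyx.
rewrite (proj2_sig (constructive_indefinite_description _ (Psi_ex p)) x hpx a).
have [m1 m1'] := mid_spec Pc hpx.
exact: (o_ind m1 m1' hpy hyx a).
Qed.

Lemma Phi_Psi p : cancel (Psi p) (Phi p).
Proof.
move=> a; refine (@lim_ext _ _ _ _ (H1e.1 p) _ (Phi p \o Psi p) idfun _ a) => {a} y hy a /=.
have [m1 m1'] := mid_spec Pc hy.
rewrite (Phi_spec hy) (Psi_spec m1 m1') (uth_spec m1') (pmE (wb_le m1')).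
exact: ((H1e.1 p).1 (mid p y) y (wb_le m1') m1 hy a).
Qed.

Lemma Psi_Phi p : cancel (Phi p) (Psi p).
Proof.
move=> b; refine (@lim_ext _ _ _ _ (H3.1 p) _ (Psi p \o Phi p) idfun _ b) => {b} x hx b /=.
have [m1 m1'] := mid_spec Pc hx.
rewrite (Psi_spec m1 m1') (Phi_spec m1) (iota_uth m1').
exact: ((H3.1 p).1 (mid p x) x (wb_le m1') m1 hx b).
Qed.

Lemma Phi_nat : natural Phi.
Proof.
move=> p q h b.
refine (@lim_ext _ _ _ _ (H1e.1 q) _ (Phi q \o pmp UOM h) (pmp UM h \o Phi p) _ b) => {b} y hy b /=.
have hpy := wb_trans_l h hy.
by rewrite (Phi_spec hy) (H3.2 p q h y hy) (H1e.2 p q h y hy) (Phi_spec hpy).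
Qed.

Lemma uom_main : pmod_iso UOM UM.
Proof.
exists Phi; split; first exact: Phi_nat.
by move=> p; exists (Psi p); [exact: Psi_Phi | exact: Phi_Psi].
Qed.
End UOM.

Section OUM.
Context (M UM OM OUM : pmod k P) (eps1 : forall p x, {linear UM p -> M x})
  (iota1 : forall p x, {linear M x -> OM p})
  (iota3 : forall p x, {linear UM x -> OUM p})
  (H1e : is_upper eps1) (H1 : is_lower iota1) (H3 : is_lower iota3).

Lemma oeta_ex x : exists u : {linear M x -> UM x},
  forall y, way_below x y -> forall v, eps1 x y (u v) = pm M x y v.
Proof.
destruct ((H1e.1 x).2 (M x) (pm M x)) as [u [Hu _]]; last by exists u.
move=> y z h hy hz v; rewrite (pmE (wb_le hy)) (pmE (wb_le hz)); exact: pcomp.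
Qed.

Definition oeta x := proj1_sig (constructive_indefinite_description _ (oeta_ex x)).
Lemma oeta_spec x y : way_below x y -> forall v, eps1 x y (oeta x v) = pm M x y v.
Proof. exact: (proj2_sig (constructive_indefinite_description _ (oeta_ex x))). Qed.

Lemma oeta_nat x1 x2 (h : x1 <= x2) v : oeta x2 (pmp M h v) = pmp UM h (oeta x1 v).
Proof.
refine (@lim_ext _ _ _ _ (H1e.1 x2) _ (oeta x2 \o pmp M h) (pmp UM h \o oeta x1) _ v) => {v} y hy v /=.
have hy1 := wb_trans_l h hy.
rewrite (oeta_spec hy) (H1e.2 x1 x2 h y hy) (oeta_spec hy1) (pmE (wb_le hy)) (pmE (wb_le hy1)).
exact: pcomp.
Qed.

Lemma oeta_eps x y (hxy : way_below x y) a : oeta y (eps1 x y a) = pmp UM (wb_le hxy) a.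
Proof.
refine (@lim_ext _ _ _ _ (H1e.1 y) _ (oeta y \o eps1 x y) (pmp UM (wb_le hxy)) _ a) => {a} z hz a /=.
rewrite (oeta_spec hz) (pmE (wb_le hz)) (H1e.2 x y (wb_le hxy) z hz).
exact: ((H1e.1 x).1 y z (wb_le hz) hxy (wb_trans_r hxy (wb_le hz)) a).
Qed.

Lemma Phi2_ex p : exists u : {linear OM p -> OUM p},
  forall x, way_below x p -> forall v, u (iota1 p x v) = iota3 p x (oeta x v).
Proof.
destruct ((H1.1 p).2 (OUM p) (fun x => iota3 p x \o oeta x)) as [u [Hu _]]; last by exists u.
move=> x1 x2 h hx1 hx2 v /=.
rewrite oeta_nat.
exact: ((H3.1 p).1 x1 x2 h hx1 hx2 (oeta x1 v)).
Qed.

Definition Phi2 p := proj1_sig (constructive_indefinite_description _ (Phi2_ex p)).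
Lemma Phi2_spec p x : way_below x p -> forall v, Phi2 p (iota1 p x v) = iota3 p x (oeta x v).
Proof. exact: (proj2_sig (constructive_indefinite_description _ (Phi2_ex p))). Qed.

Lemma w_ind p x y1 y2 : way_below x y1 -> way_below y1 p ->
  way_below x y2 -> way_below y2 p ->
  forall a, iota1 p y1 (eps1 x y1 a) = iota1 p y2 (eps1 x y2 a).
Proof.
move=> h1 h1' h2 h2' a.
have [z [zp y1z y2z]] := wb_dir Pc h1' h2'.
have hxz := wb_trans_r h1 y1z.
rewrite -((H1.1 p).1 y1 z y1z h1' zp) -((H1.1 p).1 y2 z y2z h2' zp).
by rewrite ((H1e.1 x).1 y1 z y1z h1 hxz) ((H1e.1 x).1 y2 z y2z h2 hxz).
Qed.

Lemma Psi2_ex p : exists u : {linear OUM p -> OM p},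
  forall x, way_below x p -> forall a,
    u (iota3 p x a) = iota1 p (mid x p) (eps1 x (mid x p) a).
Proof.
destruct ((H3.1 p).2 (OM p)
  (fun x => iota1 p (mid x p) \o eps1 x (mid x p))) as [u [Hu _]]; last by exists u.
move=> x1 x2 h hx1 hx2 a /=.
have [m1 m1'] := mid_spec Pc hx1.
have [m2 m2'] := mid_spec Pc hx2.
rewrite (H1e.2 x1 x2 h (mid x2 p) m2).
exact: (w_ind (wb_trans_l h m2) m2' m1 m1' a).
Qed.

Definition Psi2 p := proj1_sig (constructive_indefinite_description _ (Psi2_ex p)).
Lemma Psi2_spec p x y : way_below x y -> way_below y p -> forall a,
  Psi2 p (iota3 p x a) = iota1 p y (eps1 x y a).
Proof.
move=> hxy hyp a.
have hxp := wb_trans_r hxy (wb_le hyp).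
rewrite (proj2_sig (constructive_indefinite_description _ (Psi2_ex p)) x hxp a).
have [m1 m1'] := mid_spec Pc hxp.
exact: (w_ind m1 m1' hxy hyp a).
Qed.

Lemma Psi2_Phi2 p : cancel (Phi2 p) (Psi2 p).
Proof.
move=> c; refine (@colim_ext _ _ _ _ (H1.1 p) _ (Psi2 p \o Phi2 p) idfun _ c) => {c} x hx v /=.
have [m1 m1'] := mid_spec Pc hx.
rewrite (Phi2_spec hx) (Psi2_spec m1 m1') (oeta_spec m1) (pmE (wb_le m1)).
exact: ((H1.1 p).1 x (mid x p) (wb_le m1) hx m1' v).
Qed.

Lemma Phi2_Psi2 p : cancel (Psi2 p) (Phi2 p).
Proof.
move=> c; refine (@colim_ext _ _ _ _ (H3.1 p) _ (Phi2 p \o Psi2 p) idfun _ c) => {c} x hx a /=.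
have [m1 m1'] := mid_spec Pc hx.
rewrite (Psi2_spec m1 m1') (Phi2_spec m1') (oeta_eps m1).
exact: ((H3.1 p).1 x (mid x p) (wb_le m1) hx m1' a).
Qed.

Lemma Psi2_nat : natural Psi2.
Proof.
move=> p q h c.
refine (@colim_ext _ _ _ _ (H3.1 p) _ (Psi2 q \o pmp OUM h) (pmp OM h \o Psi2 p) _ c) => {c} x hx a /=.
have [m1 m1'] := mid_spec Pc hx.
rewrite (H3.2 p q h x hx) (Psi2_spec m1 m1') (H1.2 p q h (mid x p) m1').
exact: (Psi2_spec m1 (wb_trans_r m1' h) a).
Qed.

Lemma oum_main : pmod_iso OUM OM.
Proof.
exists Psi2; split; first exact: Psi2_nat.
by move=> p; exists (Phi2 p); [exact: Phi2_Psi2 | exact: Psi2_Phi2].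
Qed.
End OUM.

End Mod.

Theorem mainTheorem3 (k : comPzRingType) (d : Order.disp_t) (P : porderType d)
  (M UM UUM OM OOM UOM OUM : pmod k P)
  (eps1 : forall p x, {linear UM p -> M x})
  (eps2 : forall p x, {linear UUM p -> UM x})
  (iota1 : forall p x, {linear M x -> OM p})
  (iota2 : forall p x, {linear OM x -> OOM p})
  (eps3 : forall p x, {linear UOM p -> OM x})
  (iota3 : forall p x, {linear UM x -> OUM p}) :
  continuous_poset P ->
  is_upper eps1 -> is_upper eps2 ->
  is_lower iota1 -> is_lower iota2 ->
  is_upper eps3 -> is_lower iota3 ->
  (pmod_iso UUM UM /\ pmod_iso OOM OM /\ pmod_iso UOM UM /\ pmod_iso OUM OM) /\
  (usc eps2 /\ lsc iota2).
Proof.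
move=> Pc H1 H2 L1 L2 H3 L3.
have [usc2 iso1] := usc_main Pc H1 H2.
have [lsc2 iso2] := lsc_main Pc L1 L2.
have iso3 := uom_main Pc H1 L1 H3.
have iso4 := oum_main Pc H1 L1 L3.
by [].
Qed.
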